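(* Let $\Omega=\{r<0\}\subset\mathbb C^2$ with $r$ a smooth defining function that is plurisubharmonic on the boundary. Let $X$ be a smooth real-valued function, $P=1+X$, $K\in\mathbb R$, and $\rho=r(1+Kr+X)$. If $p\in b\Omega$ is a weakly pseudoconvex point (i.e. $\mathcal L_r(p)=0$) and the complex Hessian of $\rho$ is positive semidefinite at $p$, then $$B_P(p)=\big(4\,\mathrm{Re}[r_zP_{\bar z}]\,\mathrm{Re}[r_wP_{\bar w}]-|r_zP_{\bar w}+r_{\bar w}P_z|^2\big)\big|_p=0.$$
   Context: Coordinates $(z,w)$ on $\mathbb C^2$; subscripts denote partial derivatives; $b\Omega=\{r=0\}$ with $\nabla r\neq0$ there. For real $C^2$ $f$, $H_f=\begin{pmatrix} f_{z\bar z}& f_{z\bar w}\\ f_{\bar z w}& f_{w\bar w}\end{pmatrix}$, acting on $V,W\in\mathbb C^2$ by $H_f(V,W)=f_{z\bar z}V_1\bar W_1+f_{w\bar w}V_2\bar W_2+f_{z\bar w}V_1\bar W_2+f_{\bar z w}V_2\bar W_1$. $L_r$ is the vector $(r_w,-r_z)$ and the Levi form is $\mathcal L_r(p)=H_r(L_r,L_r)(p)$. ''$r$ plurisubharmonic on the boundary'' means $H_r(p)$ is positive semidefinite for all $p\in b\Omega$. *)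

(* Defs.v *)
From HB Require Import structures.
From mathcomp Require Import all_boot all_order all_algebra.
From mathcomp Require Import all_classical all_reals all_analysis.
From mathcomp Require Import complex.
Set Implicit Arguments. Unset Strict Implicit. Unset Printing Implicit Defensive.
Import Order.TTheory GRing.Theory Num.Theory.
Import numFieldNormedType.Exports.
Local Open Scope ring_scope.

(* C^2 is identified with R^4 = 'rV[R]_4 via
   (z, w) = (x1 + i y1, x2 + i y2) <-> (x1, y1, x2, y2),
   coordinate indices 0 = x1, 1 = y1, 2 = x2, 3 = y2. *)
Section Defs.
Variable R : realType.
Local Notation V := 'rV[R]_4.

Definition evec (i : 'I_4) : V := delta_mx 0 i.

Definition rpart (f : V -> R) (i : 'I_4) : V -> R := fun p => 'D_(evec i) f p.

Fixpoint Ck (k : nat) (f : V -> R) : Prop :=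
  match k with
  | 0 => continuous f
  | k'.+1 => (forall p, differentiable f p) /\ forall i, Ck k' (rpart f i)
  end.
Definition smooth (f : V -> R) : Prop := forall k, Ck k f.

Definition i0 : 'I_4 := @Ordinal 4 0 isT.
Definition i1 : 'I_4 := @Ordinal 4 1 isT.
Definition i2 : 'I_4 := @Ordinal 4 2 isT.
Definition i3 : 'I_4 := @Ordinal 4 3 isT.

Definition d_z (f : V -> R) p : R[i] := Complex (rpart f i0 p / 2) (- (rpart f i1 p / 2)).
Definition d_zb (f : V -> R) p : R[i] := Complex (rpart f i0 p / 2) (rpart f i1 p / 2).
Definition d_w (f : V -> R) p : R[i] := Complex (rpart f i2 p / 2) (- (rpart f i3 p / 2)).
Definition d_wb (f : V -> R) p : R[i] := Complex (rpart f i2 p / 2) (rpart f i3 p / 2).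

Definition rpart2 (f : V -> R) (i j : 'I_4) : V -> R := rpart (rpart f j) i.

Definition d_zzb (f : V -> R) p : R[i] :=
  Complex ((rpart2 f i0 i0 p + rpart2 f i1 i1 p) / 4) 0.
Definition d_wwb (f : V -> R) p : R[i] :=
  Complex ((rpart2 f i2 i2 p + rpart2 f i3 i3 p) / 4) 0.
(* f_{z wbar} = (1/4)(d_x1 - i d_y1)(d_x2 + i d_y2) f *)
Definition d_zwb (f : V -> R) p : R[i] :=
  Complex ((rpart2 f i0 i2 p + rpart2 f i1 i3 p) / 4)
          ((rpart2 f i0 i3 p - rpart2 f i1 i2 p) / 4).
(* f_{zbar w} = (1/4)(d_x1 + i d_y1)(d_x2 - i d_y2) f *)
Definition d_zbw (f : V -> R) p : R[i] :=
  Complex ((rpart2 f i0 i2 p + rpart2 f i1 i3 p) / 4)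
          ((rpart2 f i1 i2 p - rpart2 f i0 i3 p) / 4).

Definition Hform (f : V -> R) p (V1 V2 W1 W2 : R[i]) : R[i] :=
  d_zzb f p * V1 * conjc W1 + d_wwb f p * V2 * conjc W2
  + d_zwb f p * V1 * conjc W2 + d_zbw f p * V2 * conjc W1.

Definition Hess_psd (f : V -> R) p : Prop :=
  forall V1 V2 : R[i], 0 <= Hform f p V1 V2 V1 V2.

Definition Levi (r : V -> R) p : R[i] :=
  Hform r p (d_w r p) (- d_z r p) (d_w r p) (- d_z r p).

Definition B_P (r P : V -> R) p : R[i] :=
  4%:R * 'Re (d_z r p * d_zb P p) * 'Re (d_w r p * d_wb P p)
  - `| d_z r p * d_wb P p + d_wb r p * d_z P p | ^+ 2.

End Defs.

(* Main.v *)
Require Import Defs.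
From HB Require Import structures.
From mathcomp Require Import all_boot all_order all_algebra.
From mathcomp Require Import all_classical all_reals all_analysis.
From mathcomp Require Import complex.
From mathcomp Require Import ring lra.
Import Order.TTheory GRing.Theory Num.Theory.
Local Open Scope ring_scope.
Local Notation "x %:C" := (real_complex _ x) (format "x %:C").
Notation cR := complex.Re.
Notation cI := complex.Im.
Section D.
Variable R : realType.
Local Notation V := 'rV[R]_4.
Implicit Types (f g : V -> R).
Lemma DS f g x v : derivable f x v -> derivable g x v ->
  'D_v (fun q => f q + g q) x = 'D_v f x + 'D_v g x.
Proof. move=> df dg. exact: (@deriveD R V R f g x v df dg). Qed.
Lemma dS f g x v : derivable f x v -> derivable g x v ->
  derivable (fun q => f q + g q) x v.
Proof. move=> df dg. exact: (@derivableD R V R f g x v df dg). Qed.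
Lemma DM f g x v : derivable f x v -> derivable g x v ->
  'D_v (fun q => f q * g q) x = f x * 'D_v g x + g x * 'D_v f x.
Proof. move=> df dg. exact: (@deriveM R V f g x v df dg). Qed.
Lemma dM f g x v : derivable f x v -> derivable g x v ->
  derivable (fun q => f q * g q) x v.
Proof. move=> df dg. exact: (@derivableM R V f g x v df dg). Qed.
Lemma DC (c : R) x v : 'D_v (fun q : V => c) x = 0.
Proof. exact: (@derive_cst R V R c x v). Qed.
Lemma dC (c : R) x v : derivable (fun q : V => c) x v.
Proof. exact: (@derivable_cst R V R c x v). Qed.
Arguments DS {f g x v}. Arguments dS {f g x v}. Arguments DM {f g x v}. Arguments dM {f g x v}.
Lemma DQ (K : R) f g x v : derivable f x v -> derivable g x v ->
  'D_v (fun q => 1 + K * f q + g q) x = K * 'D_v f x + 'D_v g x.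
Proof. move=> df dg.
have d1 : derivable (fun q => K * f q) x v := dM (dC K x v) df.
have d2 : derivable (fun q => 1 + K * f q) x v := dS (dC 1 x v) d1.
rewrite (DS d2 dg) (DS (dC 1 x v) d1) (DM (dC K x v) df) !DC. ring.
Qed.
Lemma dQ (K : R) f g x v : derivable f x v -> derivable g x v ->
  derivable (fun q => 1 + K * f q + g q) x v.
Proof. move=> df dg. exact: (dS (dS (dC 1 x v) (dM (dC K x v) df)) dg). Qed.
Lemma DL (K : R) f g x v : derivable f x v -> derivable g x v ->
  'D_v (fun q => K * f q + g q) x = K * 'D_v f x + 'D_v g x.
Proof. move=> df dg.
have d1 : derivable (fun q => K * f q) x v := dM (dC K x v) df.
rewrite (DS d1 dg) (DM (dC K x v) df) !DC. ring.
Qed.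
Lemma dL (K : R) f g x v : derivable f x v -> derivable g x v ->
  derivable (fun q => K * f q + g q) x v.
Proof. move=> df dg. exact: (dS (dM (dC K x v) df) dg). Qed.
Lemma D1 f x v : derivable f x v -> 'D_v (fun q => 1 + f q) x = 'D_v f x.
Proof. move=> df. rewrite (DS (dC 1 x v) df) DC. ring. Qed.
End D.
Arguments DS {R f g x v}. Arguments dS {R f g x v}. Arguments DM {R f g x v}. Arguments dM {R f g x v}.
Arguments DQ {R} K {f g x v}. Arguments dQ {R} K {f g x v}. Arguments DL {R} K {f g x v}. Arguments dL {R} K {f g x v}.
Arguments D1 {R f x v}.


Section S.
Variable R : realType.
Implicit Types x y z : R[i].
Lemma ReM x y : cR (x * y) = cR x * cR y - cI x * cI y.
Proof. case: x => a b; case: y => c d. reflexivity. Qed.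
Lemma ImM x y : cI (x * y) = cR x * cI y + cI x * cR y.
Proof. case: x => a b; case: y => c d. reflexivity. Qed.
Lemma ReD x y : cR (x + y) = cR x + cR y.
Proof. case: x => a b; case: y => c d. reflexivity. Qed.
Lemma ImD x y : cI (x + y) = cI x + cI y.
Proof. case: x => a b; case: y => c d. reflexivity. Qed.
Lemma ReN x : cR (- x) = - cR x.
Proof. case: x => a b. reflexivity. Qed.
Lemma ImN x : cI (- x) = - cI x.
Proof. case: x => a b. reflexivity. Qed.
Lemma ReB x y : cR (x - y) = cR x - cR y.
Proof. by rewrite ReD ReN. Qed.
Lemma ImB x y : cI (x - y) = cI x - cI y.
Proof. by rewrite ImD ImN. Qed.
Lemma ReJ x : cR (conjc x) = cR x.
Proof. case: x => a b. reflexivity. Qed.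
Lemma ImJ x : cI (conjc x) = - cI x.
Proof. case: x => a b. reflexivity. Qed.
Lemma Rnat n : cR (n%:R : R[i]) = n%:R.
Proof. by rewrite -(rmorph_nat (real_complex R)). Qed.
Lemma Inat n : cI (n%:R : R[i]) = 0.
Proof. by rewrite -(rmorph_nat (real_complex R)). Qed.
Lemma ReC (a : R) : cR (a%:C) = a. Proof. by []. Qed.
Lemma ImC (a : R) : cI (a%:C) = 0. Proof. by []. Qed.
Lemma le0c z : (0 <= z) = (cI z == 0) && (0 <= cR z).
Proof. by rewrite lecE. Qed.
Lemma ceq z : cR z = 0 -> cI z = 0 -> z = 0.
Proof. case: z => a b /= -> ->. reflexivity. Qed.
Lemma Rpre x : 'Re x = (cR x)%:C. Proof. by rewrite complexRe. Qed.
Lemma nsq x : `|x| ^+ 2 = (cR x ^+ 2 + cI x ^+ 2)%:C. Proof. by rewrite add_Re2_Im2. Qed.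
End S.
Section Core.
Variable R : realType.
Definition qf (A C B1 B2 a b c d : R) :=
  A*(a^+2+b^+2) + C*(c^+2+d^+2) + 2*(B1*(a*c+b*d) - B2*(b*c-a*d)).
Definition bil (A C B1 B2 a b c d e f g h : R) :=
  A*(a*e+b*f) + C*(c*g+d*h) + B1*(a*g+c*e+b*h+d*f) - B2*(b*g+f*c-a*h-e*d).
Lemma qf_shift A C B1 B2 a b c d e f g h t :
  qf A C B1 B2 (a+t*e) (b+t*f) (c+t*g) (d+t*h) =
  qf A C B1 B2 a b c d + 2*t*bil A C B1 B2 a b c d e f g h + t^+2 * qf A C B1 B2 e f g h.
Proof. rewrite /qf /bil; ring. Qed.
Lemma G (q0 b qw : R) : (forall t, 0 <= q0 + 2*t*b + t^+2*qw) -> q0 = 0 -> 0 <= qw -> b = 0.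
Proof.
move=> H h0 hw. set u := qw + 1. have hu : 0 < u by rewrite /u; lra.
set y := b / u. have hb : b = y * u by rewrite /y; field; lra.
have := H (- y). rewrite h0 hb => hh.
have : y^+2 * (qw + 2) <= 0 by rewrite /u in hh; nra.
move=> hy. have : y = 0 by nra. move=> ->; by rewrite mul0r.
Qed.
Lemma psd_bil A C B1 B2 a b c d e f g h :
  (forall a b c d, 0 <= qf A C B1 B2 a b c d) -> qf A C B1 B2 a b c d = 0 ->
  bil A C B1 B2 a b c d e f g h = 0.
Proof.
move=> H h0. apply: (@G _ _ _ _ h0 (H e f g h)) => t.
rewrite -qf_shift; exact: H.
Qed.
Lemma core (r0 r1 r2 r3 x0 x1 x2 x3 P K s00 s11 s22 s33 s02 s13 s03 s12 : R) :
  let rh := fun (si_j ri rj xi xj : R) => P * si_j + rj * (K*ri + xi) + ri * (K*rj + xj) in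
  let Ar := (s00+s11)/4 in let Cr := (s22+s33)/4 in
  let B1r := (s02+s13)/4 in let B2r := (s03-s12)/4 in
  let Ap := (rh s00 r0 r0 x0 x0 + rh s11 r1 r1 x1 x1)/4 in
  let Cp := (rh s22 r2 r2 x2 x2 + rh s33 r3 r3 x3 x3)/4 in
  let B1p := (rh s02 r0 r2 x0 x2 + rh s13 r1 r3 x1 x3)/4 in
  let B2p := (rh s03 r0 r3 x0 x3 - rh s12 r1 r2 x1 x2)/4 in
  (forall a b c d, 0 <= qf Ar Cr B1r B2r a b c d) ->
  (forall a b c d, 0 <= qf Ap Cp B1p B2p a b c d) ->
  qf Ar Cr B1r B2r (r2/2) (-(r3/2)) (-(r0/2)) (r1/2) = 0 ->
  0 < r0^+2 + r1^+2 + r2^+2 + r3^+2 ->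
  let a1 := r0/2 in let a2 := -(r1/2) in let b1 := r2/2 in let b2 := -(r3/2) in
  let c1 := x0/2 in let c2 := -(x1/2) in let d1 := x2/2 in let d2 := -(x3/2) in
  (c1*b1 - c2*b2 - (d1*a1 - d2*a2))^+2 + (c1*b2 + c2*b1 - (d1*a2 + d2*a1))^+2 = 0.
Proof.
move=> rh Ar Cr B1r B2r Ap Cp B1p B2p Hr Hp HL Hne a1 a2 b1 b2 c1 c2 d1 d2.
set pr := c1*b1 - c2*b2 - (d1*a1 - d2*a2).
set pq := c1*b2 + c2*b1 - (d1*a2 + d2*a1).
set w1 := pr*a1 + pq*a2. set w2 := pq*a1 - pr*a2.
set w3 := pr*b1 + pq*b2. set w4 := pq*b1 - pr*b2.
have h1 := @psd_bil _ _ _ _ _ _ _ _ w1 w2 w3 w4 Hr HL.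
have HLp : qf Ap Cp B1p B2p (r2/2) (-(r3/2)) (-(r0/2)) (r1/2) = 0.
  rewrite -[RHS](mulr0 P) -HL /qf /Ap /Cp /B1p /B2p /Ar /Cr /B1r /B2r /rh; ring.
have h2 := @psd_bil _ _ _ _ _ _ _ _ w1 w2 w3 w4 Hp HLp.
have E : bil Ap Cp B1p B2p (r2/2) (-(r3/2)) (-(r0/2)) (r1/2) w1 w2 w3 w4 =
   P * bil Ar Cr B1r B2r (r2/2) (-(r3/2)) (-(r0/2)) (r1/2) w1 w2 w3 w4
   + (pr^+2 + pq^+2) * (a1^+2+a2^+2+b1^+2+b2^+2).
  rewrite /bil /w1 /w2 /w3 /w4 /pr /pq /Ap /Cp /B1p /B2p /Ar /Cr /B1r /B2r /rh /a1 /a2 /b1 /b2 /c1 /c2 /d1 /d2; by field.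
rewrite h1 h2 mulr0 add0r in E.
have hab : 0 < a1^+2+a2^+2+b1^+2+b2^+2.
  rewrite /a1 /a2 /b1 /b2. nra.
have := esym E. move/eqP; rewrite mulf_eq0 => /orP[/eqP -> //|/eqP h]. lra.
Qed.
End Core.
Arguments qf {R}. Arguments bil {R}.
Lemma ReCx (R : realType) (a b : R) : cR (Complex a b) = a. Proof. by []. Qed.
Lemma ImCx (R : realType) (a b : R) : cI (Complex a b) = b. Proof. by []. Qed.
Lemma GH (R : realType) (A C B1 B2 : R) (V1 V2 : R[i]) :
  cR (Complex A 0 * V1 * conjc V1 + Complex C 0 * V2 * conjc V2
  + Complex B1 B2 * V1 * conjc V2 + Complex B1 (- B2) * V2 * conjc V1) =
  qf A C B1 B2 (cR V1) (cI V1) (cR V2) (cI V2).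
Proof.
Time rewrite !(ReD, ReM, ImM, ImD, ReJ, ImJ).
Time rewrite !ReCx.
Time rewrite !ImCx.
rewrite /qf. Time ring.
Qed.
Lemma pos4 (R : realType) (a b c d : R) :
  0 < a^+2 \/ 0 < b^+2 \/ 0 < c^+2 \/ 0 < d^+2 -> 0 < a^+2 + b^+2 + c^+2 + d^+2.
Proof.
have := sqr_ge0 a; have := sqr_ge0 b; have := sqr_ge0 c; have := sqr_ge0 d.
move=> ? ? ? ? [h|[h|[h|h]]]; lra.
Qed.
Lemma alg_rho (R : realType) (Xp K A B C D E0 Y : R) :
  0 * (K*A + B) + (K*E0 + Y)*C + ((1 + K*0 + Xp)*A + E0*(K*C + D)) =
  (1+Xp)*A + E0*(K*C+D) + C*(K*E0+Y).
Proof. ring. Qed.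

Section M.
Variable R : realType.
Local Notation V := 'rV[R]_4.
Definition plnorm (r0 r1 r2 r3 x0 x1 x2 x3 : R) :=
  (x0/2*(r2/2) - (-(x1/2))*(-(r3/2)) - (x2/2*(r0/2) - (-(x3/2))*(-(r1/2))))^+2
  + (x0/2*(-(r3/2)) + (-(x1/2))*(r2/2) - (x2/2*(-(r1/2)) + (-(x3/2))*(r0/2)))^+2.

Lemma ReH (f : V -> R) p V1 V2 :
  cR (Hform f p V1 V2 V1 V2) =
  qf ((rpart2 f i0 i0 p + rpart2 f i1 i1 p)/4) ((rpart2 f i2 i2 p + rpart2 f i3 i3 p)/4)
     ((rpart2 f i0 i2 p + rpart2 f i1 i3 p)/4) ((rpart2 f i0 i3 p - rpart2 f i1 i2 p)/4)
     (cR V1) (cI V1) (cR V2) (cI V2).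
Proof.
have E : d_zbw f p = Complex ((rpart2 f i0 i2 p + rpart2 f i1 i3 p)/4)
   (- ((rpart2 f i0 i3 p - rpart2 f i1 i2 p)/4)).
  by rewrite /d_zbw -mulNr opprB.
rewrite /Hform E /d_zzb /d_wwb /d_zwb. exact: GH.
Qed.

Lemma psdq (f : V -> R) p : Hess_psd f p -> forall a b c d,
  0 <= qf ((rpart2 f i0 i0 p + rpart2 f i1 i1 p)/4) ((rpart2 f i2 i2 p + rpart2 f i3 i3 p)/4)
     ((rpart2 f i0 i2 p + rpart2 f i1 i3 p)/4) ((rpart2 f i0 i3 p - rpart2 f i1 i2 p)/4)
     a b c d.
Proof.
move=> H a b c d. have := H (Complex a b) (Complex c d).
by rewrite le0c ReH ReCx ImCx ReCx ImCx => /andP[_].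
Qed.

Lemma ord4 (i : 'I_4) : i = i0 \/ i = i1 \/ i = i2 \/ i = i3.
Proof.
case: i => [[|[|[|[|n]]]] h].
- by left; apply: val_inj.
- by right; left; apply: val_inj.
- by right; right; left; apply: val_inj.
- by right; right; right; apply: val_inj.
- by [].
Qed.
End M.
Section M2.
Variable R : realType.
Local Notation V := 'rV[R]_4.
Variables (r X : V -> R) (K : R).
Hypothesis dr : forall q v, derivable r q v.
Hypothesis dX : forall q v, derivable X q v.
Hypothesis drr : forall i q v, derivable (rpart r i) q v.
Hypothesis dXX : forall i q v, derivable (rpart X i) q v.

Lemma rho1 j : rpart (fun q => r q * (1 + K * r q + X q)) j =
  fun q => r q * (K * rpart r j q + rpart X j q) + (1 + K * r q + X q) * rpart r j q.
Proof.
apply/funext => q. rewrite /rpart.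
rewrite (DM (dr q (@evec R j)) (dQ K (dr q (@evec R j)) (dX q (@evec R j)))).
by rewrite (DQ K (dr q (@evec R j)) (dX q (@evec R j))).
Qed.

Lemma rho2 p i j : r p = 0 ->
  rpart2 (fun q => r q * (1 + K * r q + X q)) i j p =
  (1 + X p) * rpart2 r i j p + rpart r j p * (K * rpart r i p + rpart X i p)
  + rpart r i p * (K * rpart r j p + rpart X j p).
Proof.
move=> r0. rewrite /rpart2 rho1 {1}/rpart.
have dL1 := dL K (drr j p (@evec R i)) (dXX j p (@evec R i)).
have dQ1 := dQ K (dr p (@evec R i)) (dX p (@evec R i)).
have d1 := dM (dr p (@evec R i)) dL1.
have d2 := dM dQ1 (drr j p (@evec R i)).
rewrite (DS d1 d2) (DM (dr p (@evec R i)) dL1) (DM dQ1 (drr j p (@evec R i))).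
rewrite (DL K (drr j p (@evec R i)) (dXX j p (@evec R i))) (DQ K (dr p (@evec R i)) (dX p (@evec R i))) r0.
exact: (alg_rho R (X p) K (rpart2 r i j p) (rpart (rpart X j) i p) (rpart r i p)
   (rpart X i p) (rpart r j p) (rpart X j p)).
Qed.

Lemma dP1 i q : rpart (fun q => 1 + X q) i q = rpart X i q.
Proof. exact: (D1 (dX q (@evec R i))). Qed.
End M2.
Lemma BPgen (R : realType) (u v w x y z : R[i]) :
  4%:R * 'Re (u * v) * 'Re (w * x) - `|u * x + y * z| ^+ 2
  = (4 * (cR u * cR v - cI u * cI v) * (cR w * cR x - cI w * cI x)
     - ((cR u * cR x - cI u * cI x + (cR y * cR z - cI y * cI z)) ^+ 2
        + (cR u * cI x + cI u * cR x + (cR y * cI z + cI y * cR z)) ^+ 2))%:C.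
Proof.
rewrite !Rpre nsq.
apply/eqP; rewrite eq_complex; apply/andP; split; apply/eqP.
- rewrite ReB !ReM !ImM (Rnat R 4) (Inat R 4) !ReC !ImC ReD ImD !ReM !ImM. ring.
- rewrite ImB !ImM !ReM (Rnat R 4) (Inat R 4) !ReC !ImC. ring.
Qed.

Lemma BPfin (R : realType) (a0 a1 a2 a3 b0 b1 b2 b3 : R) :
  plnorm R a0 a1 a2 a3 b0 b1 b2 b3 = 0 ->
  let uR := a0/2 in let uI := -(a1/2) in let vR := b0/2 in let vI := b1/2 in
  let wR := a2/2 in let wI := -(a3/2) in let xR := b2/2 in let xI := b3/2 in
  let yR := a2/2 in let yI := a3/2 in let zR := b0/2 in let zI := -(b1/2) in
  4 * (uR * vR - uI * vI) * (wR * xR - wI * xI)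
     - ((uR * xR - uI * xI + (yR * zR - yI * zI)) ^+ 2
        + (uR * xI + uI * xR + (yR * zI + yI * zR)) ^+ 2) = 0.
Proof.
move=> HC /=. transitivity (- plnorm R a0 a1 a2 a3 b0 b1 b2 b3).
  by rewrite /plnorm; field.
by rewrite HC oppr0.
Qed.

Section Wz.
Variable R : realType.
Local Notation V := 'rV[R]_4.
Variables (f : V -> R) (p : V).
Lemma Rdz : cR (d_z f p) = rpart f i0 p / 2. Proof. by []. Qed.
Lemma Idz : cI (d_z f p) = - (rpart f i1 p / 2). Proof. by []. Qed.
Lemma Rdzb : cR (d_zb f p) = rpart f i0 p / 2. Proof. by []. Qed.
Lemma Idzb : cI (d_zb f p) = rpart f i1 p / 2. Proof. by []. Qed.
Lemma Rdw : cR (d_w f p) = rpart f i2 p / 2. Proof. by []. Qed.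
Lemma Idw : cI (d_w f p) = - (rpart f i3 p / 2). Proof. by []. Qed.
Lemma Rdwb : cR (d_wb f p) = rpart f i2 p / 2. Proof. by []. Qed.
Lemma Idwb : cI (d_wb f p) = rpart f i3 p / 2. Proof. by []. Qed.
End Wz.
Lemma Re0c (R : realType) : cR (0 : R[i]) = 0. Proof. reflexivity. Qed.

Theorem lemma4p5 (R : realType) (r X : 'rV[R]_4 -> R) (K : R) (p : 'rV[R]_4) :
  smooth r ->
  (* r is a defining function: nonvanishing gradient on b Omega = {r = 0} *)
  (forall q, r q = 0 -> exists i, rpart r i q != 0) ->
  (* r plurisubharmonic on the boundary *)
  (forall q, r q = 0 -> Hess_psd r q) ->
  smooth X ->
  r p = 0 ->
  Levi r p = 0 ->
  Hess_psd (fun q => r q * (1 + K * r q + X q)) p ->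
  B_P r (fun q => 1 + X q) p = 0.
Proof.
move=> sr hgrad hpsh sX rp0 hLevi hrho.
have [dr0 H1] := sr 2%N.
have [dX0 H2] := sX 2%N.
have dr : forall q v, derivable r q v by move=> q v; exact: diff_derivable.
have dX : forall q v, derivable X q v by move=> q v; exact: diff_derivable.
have drr : forall i q v, derivable (rpart r i) q v.
  by move=> i q v; have [h _] := H1 i; exact: diff_derivable.
have dXX : forall i q v, derivable (rpart X i) q v.
  by move=> i q v; have [h _] := H2 i; exact: diff_derivable.
have Hr := @psdq R _ _ (hpsh p rp0).
move: (@psdq R _ _ hrho); rewrite !(@rho2 R r X K dr dX drr dXX p _ _ rp0) => Hp.
have HL := f_equal (@complex.Re R) hLevi.
rewrite /Levi in HL. rewrite ReH in HL. rewrite ReN ImN in HL. rewrite opprK in HL.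
have Hne : 0 < rpart r i0 p ^+ 2 + rpart r i1 p ^+ 2 + rpart r i2 p ^+ 2 + rpart r i3 p ^+ 2.
  apply: pos4.
  have [i hi] := hgrad p rp0.
  have hs : 0 < rpart r i p ^+ 2 by rewrite exprn_even_gt0 //= hi orbT.
  case: (ord4 i) => [e|[e|[e|e]]]; rewrite e in hs; [left|right;left|right;right;left|right;right;right]; exact: hs.
have HC : @plnorm R (rpart r i0 p) (rpart r i1 p) (rpart r i2 p) (rpart r i3 p)
  (rpart X i0 p) (rpart X i1 p) (rpart X i2 p) (rpart X i3 p) = 0 :=
  @core R (rpart r i0 p) (rpart r i1 p) (rpart r i2 p) (rpart r i3 p)
  (rpart X i0 p) (rpart X i1 p) (rpart X i2 p) (rpart X i3 p) (1 + X p) K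
  (rpart2 r i0 i0 p) (rpart2 r i1 i1 p) (rpart2 r i2 i2 p) (rpart2 r i3 i3 p)
  (rpart2 r i0 i2 p) (rpart2 r i1 i3 p) (rpart2 r i0 i3 p) (rpart2 r i1 i2 p)
  Hr Hp HL Hne.
rewrite /B_P BPgen.
rewrite -(@dP1 R X dX i0 p) -(@dP1 R X dX i1 p) -(@dP1 R X dX i2 p) -(@dP1 R X dX i3 p) in HC.
have Hz : forall t : R, t = 0 -> t%:C = 0 :> R[i] by move=> t ->.
apply: Hz.
exact: (@BPfin R _ _ _ _ _ _ _ _ HC).
Qed.
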